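(* Let $W$ be a positive integer and let $\mathcal H$ be a real Hilbert space of dimension $d$ with $W<d\le\infty$. Let $\Phi:\mathbb R^W\to\mathcal H$ be a $C^2$ map such that the Jacobian (differential) $J_0=\frac{\partial\Phi}{\partial\mathbf w}(\mathbf 0)$ has full rank $W$. Then the set $F_\Phi$ of GF-learnable targets is not dense in $\mathcal H$.
   Context: For a target $\mathbf f\in\mathcal H$, let $L_{\mathbf f}(\mathbf w)=\frac12\|\mathbf f-\Phi(\mathbf w)\|^2_{\mathcal H}$ and let $\mathbf w(t)$, $t\ge0$, be the solution of the gradient flow $\frac{d\mathbf w}{dt}=-\nabla_{\mathbf w}L_{\mathbf f}(\mathbf w(t))$ with $\mathbf w(0)=\mathbf 0$. Then $F_\Phi=\{\mathbf f\in\mathcal H:\inf_{t\ge0}L_{\mathbf f}(\mathbf w(t))=0\}$. *)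

(* Defs.v *)
From HB Require Import structures.
From mathcomp Require Import all_boot all_order all_algebra.
From mathcomp Require Import all_classical all_reals all_analysis.
Set Implicit Arguments. Unset Strict Implicit. Unset Printing Implicit Defensive.
Import Order.TTheory GRing.Theory Num.Theory.
Import numFieldNormedType.Exports.
Local Open Scope classical_set_scope.
Local Open Scope ring_scope.

Section Defs.
Variable R : realType.

Definition is_inner_product (H : normedModType R) (inner : H -> H -> R) :=
  [/\ forall x y, inner x y = inner y x,
      forall a x y z, inner (a *: x + y) z = a * inner x z + inner y z
    & forall x, inner x x = `|x| ^+ 2].

Definition lin_indep (H : normedModType R) (n : nat) (v : 'I_n -> H) :=
  forall c : 'I_n -> R, \sum_(i < n) c i *: v i = 0 -> forall i, c i = 0.

Definition ebasis (W : nat) (i : 'I_W) : 'rV[R]_W := delta_mx 0 i.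

Definition gradient (W : nat) (L : 'rV[R]_W -> R) (w : 'rV[R]_W) : 'rV[R]_W :=
  \row_(i < W) ('D_(ebasis i) L w).

Definition C2 (W : nat) (H : normedModType R) (Phi : 'rV[R]_W -> H) :=
  [/\ forall x, differentiable Phi x,
      forall (i : 'I_W) x, differentiable (fun y => 'd Phi y (ebasis i)) x
    & forall i j : 'I_W,
        continuous (fun y => 'd (fun z => 'd Phi z (ebasis i)) y (ebasis j))].

Definition loss (W : nat) (H : normedModType R) (Phi : 'rV[R]_W -> H) (f : H)
  (w : 'rV[R]_W) : R := 2^-1 * `|f - Phi w| ^+ 2.

Definition GF_solution (W : nat) (L : 'rV[R]_W -> R) (w : R -> 'rV[R]_W) :=
  [/\ w 0 = 0,
      {within `[0, +oo[, continuous w}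
    & forall t : R, 0 < t -> derivable w t 1 /\ derive1 w t = - gradient L (w t)].

Definition GF_learnable (W : nat) (H : normedModType R) (Phi : 'rV[R]_W -> H)
  : set H :=
  [set f | exists w : R -> 'rV[R]_W,
      GF_solution (loss Phi f) w /\
      inf [set loss Phi f (w t) | t in `[0, +oo[%classic] = 0].

End Defs.

(* Main.v *)
Require Import Defs.
From HB Require Import structures.
From mathcomp Require Import all_boot all_order all_algebra.
From mathcomp Require Import all_classical all_reals all_analysis.
From mathcomp Require Import ring lra.
Import Order.TTheory GRing.Theory Num.Theory.
Import numFieldNormedType.Exports.
Local Open Scope classical_set_scope.
Local Open Scope ring_scope.
Set Implicit Arguments.
Unset Strict Implicit.
Section IP.
Context (R : realType) (H : normedModType R) (inner : H -> H -> R)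
  (hI : is_inner_product inner).

Lemma ipC x y : inner x y = inner y x. Proof. by case: hI. Qed.
Lemma ipxx x : inner x x = `|x| ^+ 2. Proof. by case: hI. Qed.
Lemma ipP a x y z : inner (a *: x + y) z = a * inner x z + inner y z.
Proof. by case: hI. Qed.
Lemma ipDl x y z : inner (x + y) z = inner x z + inner y z.
Proof. by rewrite -[x]scale1r ipP mul1r scale1r. Qed.
Lemma ip0l z : inner 0 z = 0.
Proof.
by have := ipP (-1) 0 0 z; rewrite scaler0 addr0 mulN1r addNr.
Qed.
Lemma ipZl a x z : inner (a *: x) z = a * inner x z.
Proof. by rewrite -[a *: x]addr0 ipP ip0l addr0. Qed.
Lemma ipNl x z : inner (- x) z = - inner x z.
Proof. by rewrite -scaleN1r ipZl mulN1r. Qed.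
Lemma ipBl x y z : inner (x - y) z = inner x z - inner y z.
Proof. by rewrite ipDl ipNl. Qed.
Lemma ipDr x y z : inner z (x + y) = inner z x + inner z y.
Proof. by rewrite ipC ipDl !(ipC z). Qed.
Lemma ipZr a x z : inner z (a *: x) = a * inner z x.
Proof. by rewrite ipC ipZl ipC. Qed.
Lemma ipNr x z : inner z (- x) = - inner z x.
Proof. by rewrite ipC ipNl ipC. Qed.
Lemma ipBr x y z : inner z (x - y) = inner z x - inner z y.
Proof. by rewrite ipDr ipNr. Qed.
Lemma ip0r z : inner z 0 = 0.
Proof. by rewrite ipC ip0l. Qed.

Lemma normB2 x y : `|x - y| ^+ 2 = `|x| ^+ 2 - 2 * inner x y + `|y| ^+ 2.
Proof.
rewrite -!ipxx ipBl !ipBr (ipC y x); ring.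
Qed.
Lemma normD2 x y : `|x + y| ^+ 2 = `|x| ^+ 2 + 2 * inner x y + `|y| ^+ 2.
Proof.
rewrite -!ipxx ipDl !ipDr (ipC y x); ring.
Qed.

Lemma CS x y : `|inner x y| <= `|x| * `|y|.
Proof.
have [->|y0] := eqVneq y 0; first by rewrite ip0r normr0 normr0 mulr0.
set p := inner x y; set a := `|x|; set b := `|y|.
have b0 : 0 < b by rewrite normr_gt0.
have a0 : 0 <= a by rewrite /a.
have b0' : 0 <= b by rewrite /b.
have key : 0 <= b ^+ 2 * (a ^+ 2 * b ^+ 2 - p ^+ 2).
  have := sqr_ge0 (`|(b ^+ 2) *: x - p *: y|).
  rewrite normB2 !ipZl !ipZr -/p !normrZ !exprMn -/a -/b.
  rewrite !real_normK ?num_real //.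
  move=> h; apply: le_trans h _; rewrite le_eqVlt; apply/orP; left; apply/eqP; ring.
have : p ^+ 2 <= (a * b) ^+ 2.
  rewrite -subr_ge0; move: key; rewrite pmulr_rge0 ?exprn_gt0 //.
  by rewrite exprMn.
rewrite -real_normK ?num_real // => h.
rewrite -(@ler_pXn2r _ 2) //= ?nnegrE ?mulr_ge0 //.
Qed.


Definition hq (y : H) : R := 2^-1 * `|y| ^+ 2.

Lemma ip_linear x : linear_for *:%R (inner x).
Proof. by move=> a u v; rewrite ipDr ipZr. Qed.

Lemma hq_diff x : differentiable hq x /\ 'd hq x = inner x :> (H -> R).
Proof.
pose dfL : {linear H -> R} :=
  HB.pack (inner x) (GRing.isLinear.Build _ _ _ _ (inner x) (ip_linear x)).
have dfc : continuous dfL.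
  apply: bounded_linear_continuous; apply/linear_boundedP.
  near=> r; move=> h /=.
  apply: le_trans (CS x h) _; apply: ler_wpM2r => //.
have eq : hq \o shift x = cst (hq x) + dfL +o_ 0 id.
  apply/eqaddoP => eps eps0; near=> h; rewrite /=.
  rewrite !fctE /hq normD2.
  have -> : 2^-1 * (`|h| ^+ 2 + 2 * inner h x + `|x| ^+ 2) - (2^-1 * `|x| ^+ 2 + inner x h)
     = 2^-1 * `|h| ^+ 2 by rewrite (ipC h x); field.
  rewrite normrM normrX !normr_id ger0_norm // expr2 mulrA ler_wpM2r //.
  rewrite -ler_pdivlMl // mulrC.
  near: h; apply/nbhs_norm0P; exists (eps / 2^-1); first by rewrite /= divr_gt0.
  by move=> h /= /ltW.
have dd := diff_unique dfc eq.
split; last exact dd.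
by apply/diff_locallyP; rewrite dd; split.
Unshelve. all: by end_near. Qed.

Lemma ip_suml (k : nat) (F : 'I_k -> H) z :
  inner (\sum_(j < k) F j) z = \sum_(j < k) inner (F j) z.
Proof.
elim/big_rec2: _ => [|j y1 y2 _ <-]; first exact: ip0l.
exact: ipDl.
Qed.

Lemma ip_sumr (k : nat) (F : 'I_k -> H) z :
  inner z (\sum_(j < k) F j) = \sum_(j < k) inner z (F j).
Proof.
rewrite ipC ip_suml; apply: eq_bigr => j _; exact: ipC.
Qed.

Lemma exists_normal (W : nat) (J : {linear 'rV[R]_W -> H}) (v : 'I_W.+1 -> H) :
  lin_indep v -> exists n, `|n| = 1 /\ forall w, inner n (J w) = 0.
Proof.
move=> hv.
pose M : 'M[R]_(W.+1, W) := \matrix_(j, i) inner (v j) (J (delta_mx 0 i)).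
have kM : kermx M != 0.
  rewrite kermx_eq0 /row_free; apply/negP => /eqP hr.
  by have := rank_leq_col M; rewrite hr ltnn.
have [i ci] : exists i, row i (kermx M) != 0.
  apply/existsP; apply: contraNT kM; rewrite negb_exists => /forallP h.
  by apply/eqP/row_matrixP => i; rewrite row0; apply/eqP; have := h i; rewrite negbK.
set c := row i (kermx M) in ci.
have cM0 : c *m M = 0 by apply/sub_kermxP; exact: row_sub.
pose n' := \sum_j c 0 j *: v j.
have orth i' : inner n' (J (delta_mx 0 i')) = 0.
  rewrite ip_suml.
  apply: (@eq_trans _ _ ((c *m M) 0 i')); last by rewrite cM0 mxE.
  by rewrite mxE; apply: eq_bigr => j _; rewrite ipZl !mxE.
have orthw w : inner n' (J w) = 0.
  rewrite [w]row_sum_delta linear_sum ip_sumr big1 // => j _.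
  by rewrite linearZ /= ipZr orth mulr0.
have n0 : n' != 0.
  apply/negP => /eqP hn; move: ci; apply/negP; rewrite negbK.
  by apply/eqP/rowP => j; rewrite [RHS]mxE; exact: (hv _ hn j).
exists (`|n'|^-1 *: n'); split.
  by rewrite normrZ normfV normr_id mulVf // normr_eq0.
by move=> w; rewrite ipZl orthw mulr0.
Qed.


Lemma inside_bound n h j e (d : R) : `|n| = 1 -> inner n j = 0 ->
  d - `|h| - `|e| <= `|d *: n + h - j - e|.
Proof.
move=> n1 nj.
have := CS n (d *: n + h - j - e); rewrite n1 mul1r.
rewrite !ipBr ipDr ipZr ipxx n1 expr1n mulr1 nj subr0.
have := CS n h; rewrite n1 mul1r ler_norml => /andP[h1 _].
have := CS n e; rewrite n1 mul1r ler_norml => /andP[_ e1].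
move=> hh; have := ler_norm (d + inner n h - inner n e).
move: hh; set X := `|_| ; set Y := `|_|; lra.
Qed.

Lemma sphere_bound n h j e (d : R) : `|n| = 1 -> inner n j = 0 -> 0 <= d ->
  `|d *: n + h| ^+ 2 + `|j + e| ^+ 2 - 2 * d * `|e| - 2 * `|h| * `|j + e|
  <= `|d *: n + h - (j + e)| ^+ 2.
Proof.
move=> n1 nj d0; rewrite normB2.
rewrite ipDl ipZl ipDr nj add0r.
have := CS n e; rewrite n1 mul1r ler_norml => /andP[_ e1].
have := CS h (j + e); rewrite ler_norml => /andP[_ h1].
have : d * inner n e <= d * `|e| by rewrite ler_wpM2l.
move: h1 e1.
lra.
Qed.

End IP.

Section Flow.
Context (R : realType).

Lemma grad_nonpos (W : nat) (L : 'rV[R]_W -> R) x :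
  differentiable L x -> 'd L x (- gradient L x) <= 0.
Proof.
move=> dL; rewrite linearN /= oppr_le0.
rewrite [X in 'd L x X]row_sum_delta linear_sum /=.
apply: sumr_ge0 => i _; rewrite linearZ /= mxE /ebasis deriveE //.
by have := sqr_ge0 ('d L x (delta_mx 0 i)); rewrite expr2.
Qed.

Lemma GF_mono (W : nat) (L : 'rV[R]_W -> R) (w : R -> 'rV[R]_W) :
  (forall x, differentiable L x) -> GF_solution L w ->
  forall t, 0 <= t -> L (w t) <= L (w 0).
Proof.
move=> dL [w0 cw dw] t; rewrite le_eqVlt => /orP[/eqP <-//|t0].
pose df s := 'd L (w s) (derive1 w s).
have [] := @MVT R (L \o w) df 0 t t0.
- move=> s; rewrite in_itv /= => /andP[s0 _].
  have [dws dwe] := dw s s0.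
  have dws' : differentiable w s by apply/derivable1_diffP.
  have dc : differentiable (L \o w) s by apply: differentiable_comp.
  apply: DeriveDef; first by apply/derivable1_diffP.
  by rewrite deriveE // diff_comp // /df /= derive1E'.
- have cLw : {within `[0, +oo[%classic, continuous (L \o w)}.
    move=> s; exact: (continuous_comp (cw s) (differentiable_continuous (dL (w s)))).
  apply: continuous_subspaceW cLw.
  by move=> s /=; rewrite !in_itv /= => /andP[->].
move=> c; rewrite in_itv /= => /andP[c0 _] /eqP.
rewrite subr_eq => /eqP /= ->; rewrite subr0 gerDr.
rewrite /df; have [_ ->] := dw c c0.
by rewrite mulr_le0_ge0 ?grad_nonpos // ltW.
Qed.

End Flow.

Section Lower.
Context (R : realType) (H : normedModType R).

Lemma lin_lower (W : nat) (J : {linear 'rV[R]_W -> H}) :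
  (0 < W)%N -> continuous J -> injective J ->
  exists2 c, 0 < c & forall w, c * `|w| <= `|J w|.
Proof.
move=> hW cJ iJ.
pose w0 : 'rV[R]_W := delta_mx 0 (Ordinal hW).
have w00 : w0 != 0.
  apply/negP => /eqP/rowP/(_ (Ordinal hW)); rewrite !mxE !eqxx /=.
  by move/eqP; rewrite oner_eq0.
have nw0 : 0 < `|w0| by rewrite normr_gt0.
pose A := [set w : 'rV[R]_W | `|w| = `|w0|].
have A0 : A !=set0 by exists w0.
have cA : compact A.
  apply: bounded_closed_compact.
    rewrite /bounded_set /bounded_near /=; near=> M; move=> w; rewrite /A /= => ->.
    by near: M; apply: nbhs_pinfty_ge; rewrite num_real.
  apply: (@preimage_closed _ _ (fun w : 'rV[R]_W => `|w|) [set `|w0|]).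
    by move=> x _; apply: norm_continuous.
  exact: closed_eq.
have cf : {within A, continuous (fun w => `|J w|)}.
  apply: continuous_subspaceT => x.
  exact: (continuous_comp (cJ x) (@norm_continuous _ _ (J x))).
have [c0 c0A hmin] := EVT_min_rV A0 cA cf.
move: c0A; rewrite inE /A /= => c0A.
have c00 : c0 != 0 by apply/negP => /eqP c0z; move: nw0; rewrite -c0A c0z normr0 ltxx.
have m0 : 0 < `|J c0|.
  rewrite normr_gt0; apply/negP => /eqP h.
  by move: c00; rewrite -(linear0 J) in h; rewrite (iJ _ _ h) eqxx.
exists (`|J c0| / `|w0|); first by rewrite divr_gt0.
move=> w; have [->|wn0] := eqVneq w 0; first by rewrite normr0 mulr0.
have nw : 0 < `|w| by rewrite normr_gt0.
have kA : (`|w0| / `|w|) *: w \in A.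
  by rewrite inE /A /= normrZ ger0_norm ?divr_ge0 // divfK // gt_eqF.
have := hmin _ kA; rewrite linearZ normrZ ger0_norm ?divr_ge0 //.
move=> h.
have e : `|w0| / `|w| * `|J w| / `|w0| * `|w| = `|J w|.
  by field; rewrite !gt_eqF.
rewrite -[leRHS]e ler_wpM2r // ler_wpM2r // invr_ge0.
Unshelve. all: by end_near. Qed.

End Lower.

Unset Implicit Arguments.

Theorem theorem2 (R : realType) (W : nat) (H : completeNormedModType R)
  (inner : H -> H -> R) (Phi : 'rV[R]_W -> H) :
  (0 < W)%N ->
  is_inner_product inner ->
  (exists v : 'I_W.+1 -> H, lin_indep v) ->
  C2 Phi ->
  injective ('d Phi 0) ->
  ~ dense (GF_learnable Phi).
Proof.
move=> hW hI [v hv] [dPhi _ _] iJ hd.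
set J := 'd Phi 0 in iJ.
have cJ : continuous J := diff_continuous (dPhi 0).
have [c c0 hc] := lin_lower hW cJ iJ.
have [n [n1 nJ]] := exists_normal hI J hv.
pose eta := c / 8.
have eta0 : 0 < eta by rewrite divr_gt0.
have [r0 r00 hr0] : exists2 r0 : R, 0 < r0 &
    forall x, `|x| < r0 -> `|Phi x - Phi 0 - J x| <= eta * `|x|.
  have := proj1 (eqaddoP _ _ _ _) (diff_locally (dPhi 0)) eta eta0.
  move=> /nbhs_norm0P [r0 /= r00 h]; exists r0 => // x hx.
  have := h x hx; rewrite /= !fctE addr0 opprD addrA. done.
pose r := r0 / 2.
have r0r : 0 < r by rewrite divr_gt0.
have rr0 : r < r0 by rewrite /r ltr_pdivrMr // ltr_pMr // ltr1n.
pose d := 2 * eta * r.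
pose rho := eta * r / 2.
have rho0 : 0 < rho by rewrite /rho !divr_gt0 // mulr_gt0.
pose f0 := Phi 0 + d *: n.
have [f [Of Ff]] : ball f0 rho `&` GF_learnable Phi !=set0.
  apply: hd; first by exists f0; exact: ballxx.
  exact: ball_open.
move: Of; rewrite -ball_normE /= => Of.
case: Ff => w [[w0 cw dw] infw].
have dL x : differentiable (loss Phi f) x.
  have -> : loss Phi f = @hq R H \o (fun w => f - Phi w) by [].
  apply: differentiable_comp; last exact: (proj1 (hq_diff hI _)).
  apply: differentiableB => //; exact: differentiable_cst.
have mono := GF_mono dL (And3 w0 cw dw).
pose h := f - f0.
have hh : `|h| < rho by rewrite /h distrC.
have ea : d *: n + h = f - Phi 0 by rewrite /h /f0 addrC opprD addrA subrK.
have inside x : `|x| <= r -> eta * r / 2 <= `|f - Phi x|.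
  move=> xr; pose e := Phi x - Phi 0 - J x.
  have eb : `|e| <= eta * r.
    apply: le_trans (hr0 x (le_lt_trans xr rr0)) _.
    by rewrite ler_wpM2l // ltW.
  have := inside_bound hI h e d n1 (nJ x).
  have -> : d *: n + h - J x - e = f - Phi x.
    by rewrite -addrA -opprD /e [J x + _]addrC subrK ea opprB addrA subrK.
  move=> hb; apply: le_trans hb; rewrite /d.
  move: hh eb; rewrite /rho; lra.
have sphere x : `|x| = r -> loss Phi f 0 < loss Phi f x.
  move=> xr; pose e := Phi x - Phi 0 - J x.
  have eb : `|e| <= eta * r.
    apply: le_trans (hr0 x _) _; first by rewrite xr.
    by rewrite xr.
  have jb : c * r <= `|J x| by rewrite -xr.
  have jeb : `|J x| <= `|J x + e| + `|e|.
    by rewrite -{1}[J x](addrK e) ler_normB.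
  have := sphere_bound hI h e n1 (nJ x) (_ : 0 <= d).
  have d0 : 0 <= d by rewrite /d !mulr_ge0 // ltW.
  move=> /(_ d0); rewrite ea.
  have -> : f - Phi 0 - (J x + e) = f - Phi x.
    by rewrite /e [J x + _]addrC subrK opprB addrA subrK.
  rewrite /loss ltr_pM2l ?invr_gt0 //.
  have ce : c = 8 * eta by rewrite /eta; field.
  move: jb jeb eb hh; rewrite ce /rho /d.
  set X := `|J x + e|; set E := `|e|; set Y := `|h|; set Jx := `|J x|.
  set A := `|f - Phi 0| ^+ 2; set B := `|f - Phi x| ^+ 2.
  move=> jb jeb eb hh hyp.
  have X7 : 7 * (eta * r) <= X by lra.
  have er0 : 0 < eta * r by rewrite mulr_gt0.
  have h1 : 7 * (eta * r) * (6 * (eta * r)) <= X * (X - 2 * Y).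
    apply: ler_pM; [lra|lra|lra|lra].
  have h2 : (eta * r) * E <= (eta * r) * (eta * r) by rewrite ler_wpM2l // ltW.
  have h3 : 0 < (eta * r) * (eta * r) by rewrite mulr_gt0.
  lra.
have stay t : 0 <= t -> `|w t| < r.
  move=> t0; rewrite ltNge; apply/negP => tr.
  have cn : {within `[0, t], continuous (fun s => `|w s|)}.
    have cn' : {within `[0, +oo[%classic, continuous (fun s => `|w s|)}.
      by move=> s; exact: (continuous_comp (cw s) (@norm_continuous _ _ (w s))).
    apply: continuous_subspaceW cn'.
    by move=> s /=; rewrite !in_itv /= => /andP[->].
  have [|t2 t2i t2r] := @IVT R (fun s => `|w s|) 0 t r t0 cn.
    rewrite w0 normr0 /= (min_l (normr_ge0 _)) (max_r (normr_ge0 _)).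
    by rewrite tr ltW.
  move: t2i; rewrite in_itv /= => /andP[t20 _].
  have := sphere _ t2r; have := mono _ t20; rewrite w0 => a b.
  by have := lt_le_trans b a; rewrite ltxx.
have er0 : 0 < eta * r by rewrite mulr_gt0.
have lb : 2^-1 * (eta * r / 2) ^+ 2 <=
    inf [set loss Phi f (w t) | t in `[0, +oo[%classic].
  apply: lb_le_inf.
    exists (loss Phi f (w 0)); exists 0 => //=.
    by rewrite in_itv /= lexx.
  move=> y [t tI <-]; move: tI; rewrite /= in_itv /= andbT => t0.
  rewrite /loss ler_pM2l ?invr_gt0 // !expr2.
  have := inside _ (ltW (stay t t0)) => ib.
  by apply: ler_pM => //; rewrite divr_ge0 // ltW.
move: lb; rewrite infw; apply/negP; rewrite -ltNge.
by rewrite mulr_gt0 ?invr_gt0 // exprn_gt0 // divr_gt0.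
Qed.
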